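(* Let $((G,k,d),X,\langle X_L,X_R\rangle)$ be an instance of \textsc{Annotated Contraction(vc)} such that $X_R$ is an independent set of $G$ and every edge of $G[X]$ has both endpoints in $X_L\cup X_R$. Let $F_1=E(X_L,X_R)$ be the set of edges with one endpoint in $X_L$ and the other in $X_R$, and let $F_2$ be the edge set of a spanning forest of $G[X_L]$. Let $G'=(G-F_1)/F_2$, $k'=k-|F_2|$, $d'=d-|F_2|$, let $X'$ be the image of $X$ in $G'$ (i.e. $V(G[X]/F_2)$) and $X'_L$ the image of $X_L$ in $G'$ (i.e. $V(G[X_L]/F_2)$). Then $((G,k,d),X,\langle X_L,X_R\rangle)$ is a Yes-instance if and only if $((G',k',d'),X',\langle X'_L,X_R\rangle)$ is a Yes-instance; moreover $X'$ is an independent set of $G'$.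
   Context: All graphs are finite, simple and undirected. $G-F$ denotes deletion of the edge set $F$; $G/F$ denotes contraction of all edges of $F$ (contracting $uv$ deletes $u,v$ and adds a new vertex adjacent to $(N(u)\cup N(v))\setminus\{u,v\}$, without loops or parallel edges). $\mathrm{rank}(H)$ is $|V(H)|$ minus the number of connected components of $H$, and $\mathrm{rank}(S):=\mathrm{rank}(G[S])$ for $S\subseteq V(G)$. An instance of \textsc{Annotated Contraction(vc)} consists of a graph $G$, integers $k,d$, a vertex cover $X$ of $G$ (in the paper, a minimum vertex cover), and disjoint subsets $X_L,X_R\subseteq X$; it is a Yes-instance iff there exist $X_s\subseteq X$ and $Y_s\subseteq V(G)\setminus X$ with (i) $(X\setminus X_s)\cup Y_s$ is a vertex cover of $G$, (ii) $\mathrm{rank}((X\setminus X_s)\cup Y_s)\ge k$, (iii) $|Y_s|-|X_s|\le k-d$, and (iv) $X_L\cap X_s=\emptyset$ and $X_R\subseteq X_s$. *)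

(* Defs.v *)
(* Simple graphs = symmetric irreflexive relations on a finType. *)
From mathcomp Require Import all_boot all_order all_algebra.
Set Implicit Arguments. Unset Strict Implicit. Unset Printing Implicit Defensive.
Import GRing.Theory Num.Theory.

Section Graphs.
Variable V : finType.

Definition edges (e : rel V) : {set {set V}} :=
  [set [set x; y] | x in [set: V], y in [set: V] & e x y].

Definition erel (F : {set {set V}}) : rel V := fun x y => [set x; y] \in F.

(* induced subgraph G[S] (vertices outside S are isolated) *)
Definition induced (e : rel V) (S : {set V}) : rel V :=
  fun x y => [&& x \in S, y \in S & e x y].

Definition ncomp (e : rel V) (S : {set V}) : nat :=
  #|[set [set y in S | connect (induced e S) x y] | x in S]|.

Definition rank (e : rel V) (S : {set V}) : int := (#|S|%:Z - (ncomp e S)%:Z)%R.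

Definition vertex_cover (e : rel V) (C : {set V}) : Prop :=
  forall x y, e x y -> (x \in C) || (y \in C).

Definition independent (e : rel V) (S : {set V}) : Prop :=
  forall x y, x \in S -> y \in S -> ~~ e x y.

(* F is (the edge set of) a spanning forest of the graph G[S]:
   F consists of edges of G[S], F is acyclic (no edge of F lies on a cycle of F,
   i.e. removing it disconnects its endpoints), and any two vertices connected
   in G[S] are connected in F. *)
Definition spanning_forest (e : rel V) (S : {set V}) (F : {set {set V}}) : Prop :=
  [/\ F \subset edges (induced e S),
      (forall x y, [set x; y] \in F -> ~~ connect (erel (F :\ [set x; y])) x y) &
      (forall x y, x \in S -> y \in S -> connect (induced e S) x y ->
         connect (erel F) x y)].

Definition edel (e : rel V) (F : {set {set V}}) : rel V :=
  fun x y => e x y && ([set x; y] \notin F).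

(* contraction of all edges of F: vertices are the classes of the
   equivalence generated by F; two distinct classes are adjacent iff
   some edge of G joins them *)
Definition cclass (F : {set {set V}}) (x : V) : {set V} :=
  [set y | connect (erel F) x y].

Definition qvert (F : {set {set V}}) :=
  {S : {set V} | [exists x, S == cclass F x]}.

Lemma qv_proof (F : {set {set V}}) (x : V) : [exists y, cclass F x == cclass F y].
Proof. by apply/existsP; exists x. Qed.

Definition qv (F : {set {set V}}) (x : V) : qvert F :=
  exist _ (cclass F x) (qv_proof F x).

Definition contr (e : rel V) (F : {set {set V}}) : rel (qvert F) :=
  fun S T => (val S != val T) &&
    [exists u, exists v, [&& u \in val S, v \in val T & e u v]].

End Graphs.

Arguments qv {V} F x.
Arguments contr {V} e F.


Definition yes_instance (V : finType) (e : rel V) (k d : int)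
    (X XL XR : {set V}) : Prop :=
  exists Xs Ys : {set V},
    Xs \subset X /\ Ys \subset ~: X /\
    vertex_cover e ((X :\: Xs) :|: Ys) /\
    (k <= rank e ((X :\: Xs) :|: Ys))%R /\
    (#|Ys|%:Z - #|Xs|%:Z <= k - d)%R /\
    [disjoint XL & Xs] /\ XR \subset Xs.

(* Main.v *)
Require Import Defs.
From mathcomp Require Import all_boot all_order all_algebra zify.
Import GRing.Theory Num.Theory.
Set Implicit Arguments. Unset Strict Implicit.
Lemma connect_inv (T : finType) (r : rel T) (P : T -> Prop) a b :
  connect r a b -> P a -> (forall x y, r x y -> P x -> P y) -> P b.
Proof.
move=> /connectP [p pth ->] Pa step.
elim: p a pth Pa => [|z p IH] a //= /andP [raz pth] Pa.
exact: (IH z pth (step _ _ raz Pa)).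
Qed.

Lemma connect_map (T T' : finType) (r : rel T) (r' : rel T') (f : T -> T') a b :
  (forall x y, r x y -> connect r' (f x) (f y)) -> connect r a b -> connect r' (f a) (f b).
Proof.
move=> H cab; apply: (@connect_inv _ r (fun z => connect r' (f a) (f z))) cab _ _ => //.
by move=> x y rxy cx; apply: connect_trans cx (H _ _ rxy).
Qed.

Lemma set2_eq (T : finType) (a b x y : T) :
  [set a; b] = [set x; y] -> (a = x /\ b = y) \/ (a = y /\ b = x).
Proof.
move=> E.
have ha : a \in [set x; y] by rewrite -E !inE eqxx.
have hb : b \in [set x; y] by rewrite -E !inE eqxx orbT.
have hx : x \in [set a; b] by rewrite E !inE eqxx.
have hy : y \in [set a; b] by rewrite E !inE eqxx orbT.
move: ha hb hx hy; rewrite !inE.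
case/orP=> /eqP ea; case/orP=> /eqP eb; subst.
- by move=> _ /orP [] /eqP ->; left.
- by left.
- by right.
- by move=> /orP [] /eqP -> _; right.
Qed.

Lemma set2C (T : finType) (a b : T) : [set a; b] = [set b; a].
Proof. by apply/setP=> z; rewrite !inE orbC. Qed.

Lemma erel_sym (T : finType) (F : {set {set T}}) : symmetric (erel F).
Proof. by move=> x y; rewrite /erel set2C. Qed.

Lemma induced_sym (T : finType) (r : rel T) S : symmetric r -> symmetric (induced r S).
Proof. by move=> sr x y; rewrite /induced sr; case: (x \in S); case: (y \in S). Qed.

Lemma ncomp_map (T T' : finType) (r : rel T) (r' : rel T') (S : {set T}) (f : T -> T') :
  symmetric r ->
  (forall a b, a \in S -> b \in S ->
     connect (induced r' (f @: S)) (f a) (f b) = connect (induced r S) a b) ->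
  ncomp r' (f @: S) = ncomp r S.
Proof.
move=> sr H; rewrite /ncomp.
have cs := sym_connect_sym (induced_sym S sr).
set comp := fun u => [set y in S | connect (induced r S) u y].
have E : [set [set y in f @: S | connect (induced r' (f @: S)) x y] | x in f @: S]
   = [set f @: comp u | u in S].
  rewrite -imset_comp; apply: eq_in_imset => u uS /=.
  apply/setP=> w; apply/idP/idP.
    rewrite inE => /andP [] /imsetP [y yS ->]; rewrite H // => cuy.
    by apply/imsetP; exists y => //; rewrite inE yS.
  case/imsetP=> z; rewrite /comp inE => /andP [zS cuz] ->.
  by rewrite inE H // cuz andbT; apply/imsetP; exists z.
rewrite E; have -> : [set f @: comp u | u in S] = [set f @: A | A : {set T} in [set comp u | u in S]] by rewrite -imset_comp.
rewrite card_in_imset //.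
move=> A B /imsetP [a aS ->] /imsetP [b bS ->] /= EAB.
have : f a \in f @: comp b.
  by rewrite -EAB; apply/imsetP; exists a => //; rewrite inE aS connect0.
case/imsetP=> z; rewrite /comp inE => /andP [zS cbz] faz.
have caz : connect (induced r S) a z by rewrite -H // faz connect0.
have cab : connect (induced r S) a b.
  by apply: connect_trans caz _; rewrite cs.
apply/setP=> y; rewrite !inE; case: (y \in S) => //=.
apply/idP/idP => h; first by apply: connect_trans h; rewrite cs.
exact: connect_trans cab h.
Qed.

Lemma disjointI (T : finType) (A B : {set T}) :
  (forall x, x \in A -> x \in B -> False) -> [disjoint A & B].
Proof.
move=> H; rewrite disjoint_subset; apply/subsetP => x xA; rewrite inE.
by apply/negP => xB; exact: H x xA xB.
Qed.
Lemma connect_add (T : finType) (F0 : {set {set T}}) x y u z :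
  connect (erel ([set x; y] |: F0)) u z =
  [|| connect (erel F0) u z,
      connect (erel F0) u x && connect (erel F0) y z |
      connect (erel F0) u y && connect (erel F0) x z].
Proof.
have cs := sym_connect_sym (erel_sym F0).
have sub : subrel (erel F0) (connect (erel ([set x; y] |: F0))).
  by move=> a b h; apply: connect1; rewrite /erel in h *; rewrite in_setU1 h orbT.
have exy : erel ([set x; y] |: F0) x y by rewrite /erel setU11.
have eyx : erel ([set x; y] |: F0) y x by rewrite erel_sym.
apply/idP/idP.
  move=> h; apply: (@connect_inv _ _ (fun z => is_true [|| connect (erel F0) u z,
      connect (erel F0) u x && connect (erel F0) y z |
      connect (erel F0) u y && connect (erel F0) x z]) u z h).
    by rewrite connect0.
  move=> w1 w2; rewrite /erel in_setU1 => /orP [/eqP /set2_eq [[-> ->]|[-> ->]] | e12].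
  - case/or3P=> [h1|/andP [h1 _]|/andP [h1 _]]; by rewrite h1 ?connect0 ?andbT ?orbT.
  - case/or3P=> [h1|/andP [h1 _]|/andP [h1 _]]; by rewrite h1 ?connect0 ?andbT ?orbT.
  - have c12 : connect (erel F0) w1 w2 by apply: connect1.
    case/or3P=> [h1|/andP [-> h1]|/andP [-> h1]].
    + by rewrite (connect_trans h1 c12).
    + by rewrite (connect_trans h1 c12) orbT.
    + by rewrite (connect_trans h1 c12) !orbT.
case/or3P=> [h|/andP [h1 h2]|/andP [h1 h2]].
- exact: (connect_sub sub).
- apply: connect_trans (connect_sub sub h1) _.
  apply: connect_trans (connect_sub sub h2); exact: connect1.
- apply: connect_trans (connect_sub sub h1) _.
  apply: connect_trans (connect_sub sub h2); exact: connect1.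
Qed.

Lemma class_eq (T : finType) (F : {set {set T}}) a b :
  connect (erel F) a b -> cclass F a = cclass F b.
Proof.
move=> cab; have cs := sym_connect_sym (erel_sym F).
by apply/setP=> z; rewrite !inE (same_connect cs cab).
Qed.

Lemma in_cclass (T : finType) (F : {set {set T}}) a b :
  (b \in cclass F a) = connect (erel F) a b.
Proof. by rewrite inE. Qed.

Lemma cclass_add (T : finType) (F0 : {set {set T}}) x y u :
  cclass ([set x; y] |: F0) u =
  if connect (erel F0) u x || connect (erel F0) u y
  then cclass F0 x :|: cclass F0 y else cclass F0 u.
Proof.
have cs := sym_connect_sym (erel_sym F0).
apply/setP=> z; rewrite inE connect_add.
case cux: (connect (erel F0) u x) => /=.
  rewrite !inE (same_connect cs cux z).
  by case: (connect (erel F0) x z); case: (connect (erel F0) y z);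
     case: (connect (erel F0) u y).
case cuy: (connect (erel F0) u y) => /=.
  rewrite !inE (same_connect cs cuy z) /=.
  by rewrite orbC.
by rewrite orbF inE.
Qed.

Lemma cclass0 (T : finType) (u : T) : cclass set0 u = [set u].
Proof.
apply/setP=> z; rewrite !inE; apply/idP/idP.
  move=> h; apply/eqP; apply: (@connect_inv _ _ (fun z => z = u) u z h) => //.
    by move=> a b; rewrite /erel in_set0.
by move=> /eqP ->; rewrite connect0.
Qed.

Lemma forest_count (T : finType) (F2 : {set {set T}}) :
 (forall f, f \in F2 -> exists x y, x != y /\ f = [set x; y]) ->
 (forall x y, [set x; y] \in F2 -> ~~ connect (erel (F2 :\ [set x; y])) x y) ->
 forall F : {set {set T}}, F \subset F2 -> #|[set cclass F u | u in [set: T]]| + #|F| = #|T|.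
Proof.
move=> H2 Hac F; have [n cF] : {n | #|F| = n} by exists #|F|.
elim: n F cF => [|n IH] F cF sF.
  move/cards0_eq: cF => ->; rewrite cards0 addn0.
  have -> : [set cclass set0 u | u in [set: T]] = [set [set u] | u in [set: T]].
    by apply: eq_imset => u; rewrite cclass0.
  by rewrite card_imset ?cardsT //; apply: set1_inj.
have [f fF] : exists f, f \in F by apply/set0Pn; rewrite -card_gt0 cF.
set F0 := F :\ f.
have cF0 : #|F0| = n by move: cF; rewrite (cardsD1 f F) fF add1n => [[]].
have sF0 : F0 \subset F2 by apply: subset_trans sF; apply: subsetDl.
have {IH} IH := IH F0 cF0 sF0.
have [x [y [nxy ef]]] := H2 f (subsetP sF f fF).
have EF : F = [set x; y] |: F0 by rewrite -ef /F0 setD1K.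
have ncxy : ~~ connect (erel F0) x y.
  apply: contra (Hac x y _); last by rewrite -ef (subsetP sF).
  apply: connect_sub => a b h; apply: connect1; move: h; rewrite /erel -ef.
  by rewrite /F0 !inE => /andP [-> h]; rewrite (subsetP sF).
have cs := sym_connect_sym (erel_sym F0).
set cx := cclass F0 x; set cy := cclass F0 y.
set Q0 := [set cclass F0 u | u in [set: T]].
pose g := fun B : {set T} => if (B == cx) || (B == cy) then cx :|: cy else B.
have xcx : x \in cx by rewrite in_cclass connect0.
have ycy : y \in cy by rewrite in_cclass connect0.
have ncxcy : cx != cy.
  by apply/eqP=> E; move: ycy; rewrite -E in_cclass (negbTE ncxy).
have cxQ : cx \in Q0 by apply/imsetP; exists x; rewrite ?inE.
have cyQ : cy \in Q0 by apply/imsetP; exists y; rewrite ?inE.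
have EQ : [set cclass F u | u in [set: T]] = g @: Q0.
  rewrite EF /Q0 -imset_comp; apply: eq_imset => u /=.
  rewrite cclass_add /g.
  case cux: (connect (erel F0) u x).
    by rewrite (class_eq cux) eqxx.
  case cuy: (connect (erel F0) u y).
    by rewrite (class_eq cuy) -/cy (eqxx cy) !orbT.
  have -> : (cclass F0 u == cx) = false.
    by apply: negbTE; apply/eqP => E; move: xcx; rewrite -E in_cclass cux.
  have -> // : (cclass F0 u == cy) = false.
  by apply: negbTE; apply/eqP => E; move: ycy; rewrite -E in_cclass cuy.
have EQ2 : g @: Q0 = g @: (Q0 :\ cy).
  apply/eqP; rewrite eqEsubset [X in _ && X]imsetS ?subsetDl // andbT.
  apply/subsetP=> w /imsetP [B BQ ->].
  case: (eqVneq B cy) => [->|nB].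
    have -> : g cy = g cx by rewrite /g !eqxx orbT.
    by apply/imsetP; exists cx => //; rewrite in_setD1 ncxcy cxQ.
  by apply/imsetP; exists B => //; rewrite in_setD1 nB BQ.
have ginj : {in Q0 :\ cy &, injective g}.
  have key : forall B, B \in Q0 -> B != cx -> B != cy -> B != cx :|: cy.
    move=> B /imsetP [w _ ->] n1 n2; apply/eqP => E.
    have : x \in cclass F0 w by rewrite E inE xcx.
    by rewrite in_cclass => /class_eq E2; move: n1; rewrite E2 eqxx.
  move=> B1 B2; rewrite !inE => /andP [n1 B1Q] /andP [n2 B2Q]; rewrite /g.
  rewrite (negbTE n1) (negbTE n2) !orbF.
  case: (eqVneq B1 cx) => [->|m1]; case: (eqVneq B2 cx) => [->|m2] //.
  - by move=> E; move: (key _ B2Q m2 n2); rewrite -E eqxx.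
  - by move=> E; move: (key _ B1Q m1 n1); rewrite E eqxx.
rewrite EQ EQ2 card_in_imset // -IH EF.
rewrite cardsU1 (cardsD1 cy Q0) cyQ.
have -> : ([set x; y] \notin F0) by rewrite /F0 -ef !inE eqxx.
by rewrite addnS.
Qed.
Unset Implicit Arguments. Set Strict Implicit.
Theorem lemma14 (V : finType) (e : rel V) (k d : int) (X XL XR : {set V})
    (F2 : {set {set V}}) :
  symmetric e -> irreflexive e ->
  vertex_cover e X -> XL \subset X -> XR \subset X -> [disjoint XL & XR] ->
  independent e XR ->
  (forall x y, x \in X -> y \in X -> e x y ->
     (x \in XL :|: XR) && (y \in XL :|: XR)) ->
  spanning_forest e XL F2 ->
  let F1 := [set [set x; y] | x in XL, y in XR & e x y] in
  let G' := contr (edel e F1) F2 in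
  let k' := (k - #|F2|%:Z)%R in
  let d' := (d - #|F2|%:Z)%R in
  let X' := [set qv F2 x | x in X] in
  let XL' := [set qv F2 x | x in XL] in
  let XR' := [set qv F2 x | x in XR] in
  (yes_instance e k d X XL XR <-> yes_instance G' k' d' X' XL' XR')
  /\ independent G' X'.
Proof.
move=> se ie vcX sXL sXR dLR indR hX [sF2 acF2 spF2] F1 G' k' d' X' XL' XR'.
set q := qv F2.
have cs2 := sym_connect_sym (erel_sym F2).
have stepF2 : forall a b, erel F2 a b -> [&& a \in XL, b \in XL & e a b].
  move=> a b h; have := subsetP sF2 _ h.
  case/imset2P => x y _; rewrite !inE /induced => ixy /set2_eq [[-> ->]|[-> ->]] //.
  by case/and4P: ixy => _ -> -> exy; rewrite se.
have notXL1 : forall a b, a \notin XL -> connect (erel F2) a b -> b = a.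
  move=> a b na h; apply: (@connect_inv _ _ (fun z => z = a) a b h) => // x y exy xa.
  by subst x; case/and3P: (stepF2 _ _ exy) => xa; rewrite xa in na.
have XLcl : forall a b, a \in XL -> connect (erel F2) a b -> b \in XL.
  move=> a b aL h; apply: (@connect_inv _ _ (fun z => is_true (z \in XL)) a b h) => //.
  by move=> x y /stepF2 /and3P [].
have classS : forall (S : {set V}) a b, XL \subset S -> a \in S ->
    connect (erel F2) a b -> b \in S.
  move=> S a b sS aS h; case: (boolP (a \in XL)) => aL.
    exact: (subsetP sS) (XLcl _ _ aL h).
  by rewrite (notXL1 _ _ aL h).
have liftC : forall (S : {set V}) a b, XL \subset S ->
    connect (erel F2) a b -> connect (induced e S) a b.
  move=> S a b sS; apply: connect_sub => x y /stepF2 /and3P [xL yL exy].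
  by apply: connect1; rewrite /induced (subsetP sS _ xL) (subsetP sS _ yL).
have qE : forall a b, (q a == q b) = connect (erel F2) a b.
  move=> a b; rewrite -val_eqE /=; apply/eqP/idP => [E|]; last exact: class_eq.
  by rewrite -in_cclass E in_cclass connect0.
have qsurj : forall T : qvert F2, exists x, T = q x.
  case=> S pf; have := pf; case/existsP=> x /eqP ES; exists x.
  by apply: val_inj => /=.
have memq : forall a b, (b \in val (q a)) = connect (erel F2) a b.
  by move=> a b; rewrite in_cclass.
have qinj : forall a b, a \notin XL -> q a = q b -> b = a.
  by move=> a b aL /eqP; rewrite qE => /(notXL1 _ _ aL).
have qinS : forall (S : {set V}) a, XL \subset S -> (q a \in q @: S) = (a \in S).
  move=> S a sS; apply/idP/idP; last by move=> aS; apply: imset_f.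
  case/imsetP=> c cS /eqP; rewrite qE => h.
  by apply: (classS S c a sS cS); rewrite cs2.
have F1XL : forall a b, [set a; b] \in F1 -> (a \in XL) || (b \in XL).
  move=> a b /imset2P [x y xL]; rewrite inE => /andP [yR _] /set2_eq [[-> _]|[_ ->]].
    by rewrite xL.
  by rewrite xL orbT.
have F1nC : forall (C : {set V}) a b, [disjoint C & XR] -> a \in C -> b \in C ->
    [set a; b] \notin F1.
  move=> C a b dC aC bC; apply/negP => /imset2P [x y xL]; rewrite inE => /andP [yR _].
  case/set2_eq => [[_ E]|[E _]]; subst.
    by rewrite (disjointFr dC bC) in yR.
  by rewrite (disjointFr dC aC) in yR.
have inF1 : forall u v, u \in XL -> v \in XR -> e u v -> [set u; v] \in F1.
  move=> u v uL vR euv; apply/imset2P; exists u v => //; by rewrite inE vR.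
have indX' : independent G' X'.
  move=> S T /imsetP [x xX ->] /imsetP [y yX ->]; apply/negP.
  case/andP=> nv /existsP [u /existsP [v /and3P [uS vT euv]]].
  move: uS vT; rewrite !memq => cxu cyv.
  have uX : u \in X := classS X x u sXL xX cxu.
  have vX : v \in X := classS X y v sXL yX cyv.
  case/andP: euv => euv nF1.
  case/andP: (hX u v uX vX euv); rewrite !inE => /orP [uL|uR] /orP [vL|vR].
  - have cuv : connect (induced e XL) u v by apply: connect1; rewrite /induced uL vL euv.
    have := connect_trans cxu (connect_trans (spF2 u v uL vL cuv) _).
    rewrite -cs2 in cyv; move/(_ _ cyv); rewrite -qE => /eqP E.
    by move/negP: nv; apply; rewrite val_eqE; apply/eqP; exact: E.
  - by rewrite (inF1 u v uL vR euv) in nF1.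
  - have evu : e v u by rewrite se.
    by rewrite set2C (inF1 v u vL uR evu) in nF1.
  - by rewrite (negbTE (indR u v uR vR)) in euv.
have contrI : forall x y, q x != q y -> edel e F1 x y -> G' (q x) (q y).
  move=> x y nE exy; rewrite /G' /contr val_eqE nE /=.
  by apply/existsP; exists x; apply/existsP; exists y; rewrite !memq !connect0.
have vcE : forall C : {set V}, XL \subset C ->
    vertex_cover e C <-> vertex_cover G' (q @: C).
  move=> C sC; split.
    move=> vc S T; case: (qsurj S) => s ->; case: (qsurj T) => t ->.
    case/andP => _ /existsP [u /existsP [v /and3P [us vt /andP [euv _]]]].
    rewrite memq in us; rewrite memq in vt.
    have -> : q s = q u by apply/eqP; rewrite qE.
    have -> : q t = q v by apply/eqP; rewrite qE.
    rewrite !qinS //; exact: vc.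
  move=> vc u v euv; case: (boolP ([set u; v] \in F1)) => hF.
    case/orP: (F1XL u v hF) => h; first by rewrite (subsetP sC _ h).
    by rewrite (subsetP sC _ h) orbT.
  case: (eqVneq (q u) (q v)) => [E|nE].
    move/eqP: E; rewrite qE => cuv.
    case: (boolP (u \in XL)) => uL; first by rewrite (subsetP sC _ uL).
    by rewrite (notXL1 _ _ uL cuv) ie in euv.
  have := contrI u v nE; rewrite /edel euv hF => /(_ isT) /vc.
  by rewrite !qinS.
have H2' : forall f, f \in F2 -> exists x y, x != y /\ f = [set x; y].
  move=> f /(subsetP sF2) /imset2P [x y _]; rewrite !inE /induced => ixy ->.
  exists x, y; split => //; case/and4P: ixy => _ _ _ exy.
  by apply: contraTneq exy => ->; rewrite ie.
have cT : #|[set: qvert F2]| = #|[set cclass F2 u | u in [set: V]]|.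
  rewrite -(card_imset [set: qvert F2] val_inj).
  suff -> : [set val x | x in [set: qvert F2]] = [set cclass F2 u | u in [set: V]] by [].
  apply/setP => Z; apply/imsetP/imsetP => [[T _ ->]|[u _ ->]].
    by case: (qsurj T) => x ->; exists x.
  by exists (q u).
have fc := forest_count H2' acF2 (subxx F2).
have rankE : forall C : {set V}, XL \subset C -> [disjoint C & XR] ->
    rank G' (q @: C) = (rank e C - #|F2|%:Z)%R.
  move=> C sC dC.
  have cardE : #|q @: C| + #|F2| = #|C|.
    have sU : [set: qvert F2] = q @: C :|: q @: (~: C).
      rewrite -imsetU setUCr; apply/setP => T; rewrite inE.
      by case: (qsurj T) => x ->; rewrite imset_f ?inE.
    have dI : q @: C :&: q @: (~: C) = set0.
      apply/eqP; rewrite -subset0; apply/subsetP => T; rewrite inE.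
      case/andP=> /imsetP [c cC ->] /imsetP [w wC /eqP]; rewrite qE => h.
      by rewrite inE (classS C c w sC cC h) in wC.
    have cN : #|q @: (~: C)| = #|~: C|.
      apply: card_in_imset => a b; rewrite !inE => aC bC E; symmetry.
      apply: (qinj a b) => //; apply/negP => aL.
      by rewrite (subsetP sC _ aL) in aC.
    have := cardsU (q @: C) (q @: (~: C)); rewrite -sU dI cards0 subn0 cN cT.
    have := cardsC C; lia.
  have ncE : ncomp G' (q @: C) = ncomp e C.
    apply: ncomp_map se _ => a b aC bC; apply/idP/idP.
      move=> h.
      have : forall t, t \in val (q b) -> connect (induced e C) a t.
        refine (@connect_inv _ _
          (fun T : qvert F2 => forall t, t \in val T -> connect (induced e C) a t) (q a) (q b) h _ _).
          by move=> t; rewrite memq; apply: liftC.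
        move=> S T /and3P [SC TC /andP [_ /existsP [x /existsP [y /and3P [xS yT exy]]]]] PS t tT.
        case: (qsurj S) => s ES; case: (qsurj T) => s' ET; subst S T.
        have PSx : connect (induced e C) a x by apply: PS.
        move: SC TC xS yT tT => sC' sC'' xs ys tt.
        rewrite qinS // in sC'; rewrite qinS // in sC''.
        rewrite memq in xs; rewrite memq in ys; rewrite memq in tt.
        have xC := classS C s x sC sC' xs.
        have yC := classS C s' y sC sC'' ys.
        apply: connect_trans PSx _; apply: connect_trans (liftC C y t sC _).
          by apply: connect1; rewrite /induced xC yC; case/andP: exy.
        by rewrite cs2 in ys; apply: connect_trans ys tt.
      by move/(_ b); rewrite memq connect0; apply.
    apply: connect_map => x y /and3P [xC yC exy].
    case: (eqVneq (q x) (q y)) => [->|nE]; first exact: connect0.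
    apply: connect1; rewrite /induced !qinS // xC yC /=.
    by apply: contrI => //; rewrite /edel exy (F1nC C x y dC xC yC).
  rewrite /rank ncE -cardE; lia.
split=> //; split.
  case=> Xs [Ys [sXs [sYs [vc [rk [cd [dXs sRs]]]]]]].
  have XsnL : forall x, x \in Xs -> x \notin XL.
    by move=> x xs; apply/negP => xL; rewrite (disjointFr dXs xL) in xs.
  have YsnX : forall y, y \in Ys -> y \notin X.
    by move=> y /(subsetP sYs); rewrite inE.
  have YsnL : forall y, y \in Ys -> y \notin XL.
    by move=> y /YsnX yX; apply/negP => /(subsetP sXL); apply/negP.
  set C := (X :\: Xs) :|: Ys.
  have sC : XL \subset C.
    apply/subsetP => x xL; rewrite !inE (subsetP sXL _ xL) andbT.
    by rewrite (disjointFr dXs xL).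
  have dC : [disjoint C & XR].
    apply: disjointI => x; rewrite !inE => /orP [/andP [nx xX] | yY] xR.
      by rewrite (subsetP sRs _ xR) in nx.
    by move: (YsnX x yY); rewrite (subsetP sXR _ xR).
  have EC : q @: C = (X' :\: q @: Xs) :|: q @: Ys.
    rewrite imsetU; congr (_ :|: _).
    apply/eqP; rewrite eqEsubset; apply/andP; split; apply/subsetP => T.
      case/imsetP => x; rewrite inE => /andP [nxs xX] ->.
      rewrite inE (imset_f q xX) andbT; apply/imsetP => [[z zs E]].
      by move: (qinj z x (XsnL z zs) (esym E)) => exz; rewrite exz zs in nxs.
    rewrite inE => /andP [nT /imsetP [x xX ET]]; subst T.
    apply: imset_f; rewrite inE xX andbT; apply: contra nT => xs; exact: imset_f.
  have cY : #|q @: Ys| = #|Ys|.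
    by apply: card_in_imset => a b aY bY E; symmetry; apply: (qinj a b (YsnL a aY) E).
  have cX : #|q @: Xs| = #|Xs|.
    by apply: card_in_imset => a b aY bY E; symmetry; apply: (qinj a b (XsnL a aY) E).
  exists (q @: Xs), (q @: Ys); split; first exact: imsetS.
  split.
    apply/subsetP => T /imsetP [y yY ->]; rewrite inE; apply/imsetP => [[x xX E]].
    by move: (qinj y x (YsnL y yY) E) (YsnX y yY) => exy; rewrite -exy xX.
  split; first by rewrite -EC; apply/(vcE C sC).
  split; first by have rk2 : (k <= rank e C)%R := rk; rewrite -EC rankE // /k'; lia.
  split; first by rewrite cY cX /k' /d'; lia.
  split; last exact: imsetS.
  apply: disjointI => T /imsetP [x xL ->] /imsetP [z zs E].
  by move: (qinj z x (XsnL z zs) (esym E)) (XsnL z zs) => exz; rewrite -exz xL.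
case=> Xs' [Ys' [sXs' [sYs' [vc [rk [cd [dXs' sRs']]]]]]].
set Xs := [set x in X | q x \in Xs']; set Ys := [set y | q y \in Ys'].
have YsnX : forall y, q y \in Ys' -> y \notin X.
  move=> y /(subsetP sYs'); rewrite inE; apply: contra => yX; exact: imset_f.
have XsnL : forall x, q x \in Xs' -> x \notin XL.
  move=> x h; apply/negP => xL.
  by rewrite (disjointFr dXs' (imset_f q xL)) in h.
set C := (X :\: Xs) :|: Ys.
have EC : q @: C = (X' :\: Xs') :|: Ys'.
  apply/eqP; rewrite eqEsubset; apply/andP; split; apply/subsetP => T.
    case/imsetP => x; rewrite !inE => /orP [/andP [nx xX]|xY] ->.
      by rewrite xX /= in nx; rewrite nx imset_f.
    by rewrite xY orbT.
  rewrite !inE => /orP [/andP [nT /imsetP [x xX ET]]|TY].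
    by subst T; apply: imset_f; rewrite !inE xX nT.
  by case: (qsurj T) TY => y -> yY; apply: imset_f; rewrite !inE yY orbT.
have sC : XL \subset C.
  apply/subsetP => x xL; rewrite !inE (subsetP sXL _ xL) /=.
  by apply/orP; left; rewrite andbT; apply/negP => h; move: (XsnL x h); rewrite xL.
have dC : [disjoint C & XR].
  apply: disjointI => x; rewrite !inE => /orP [/andP [nx xX] | yY] xR.
    by rewrite xX (subsetP sRs' _ (imset_f q xR)) in nx.
  by move: (YsnX x yY); rewrite (subsetP sXR _ xR).
have qY : q @: Ys = Ys'.
  apply/eqP; rewrite eqEsubset; apply/andP; split; apply/subsetP => T.
    by case/imsetP => y; rewrite inE => yY ->.
  by case: (qsurj T) => y -> yY; apply: imset_f; rewrite inE.
have qX : q @: Xs = Xs'.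
  apply/eqP; rewrite eqEsubset; apply/andP; split; apply/subsetP => T.
    by case/imsetP => y; rewrite inE => /andP [_ yY] ->.
  move=> TX; case/imsetP: (subsetP sXs' _ TX) => x xX ET; subst T.
  by apply: imset_f; rewrite inE xX TX.
have cY : #|Ys'| = #|Ys|.
  rewrite -qY; apply: card_in_imset => a b aY bY E; symmetry.
  apply: (qinj a b _ E); move: aY; rewrite inE => /YsnX; apply: contra.
  exact: (subsetP sXL).
have cX : #|Xs'| = #|Xs|.
  rewrite -qX; apply: card_in_imset => a b aY bY E; symmetry.
  by apply: (qinj a b _ E); move: aY; rewrite inE => /andP [_ /XsnL].
exists Xs, Ys; split.
  by apply/subsetP => x; rewrite inE => /andP [].
split.
  by apply/subsetP => x; rewrite !inE => /YsnX.
split; first by apply/(vcE C sC); rewrite EC.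
split; first by change (k <= rank e C)%R; rewrite -EC rankE // /k' in rk; lia.
split; first by rewrite /k' /d' cY cX in cd; lia.
split.
  apply: disjointI => x xL; rewrite inE => /andP [_ /XsnL].
  by rewrite xL.
apply/subsetP => x xR; rewrite inE (subsetP sXR _ xR) /=.
exact: (subsetP sRs') (imset_f q xR).
Qed.
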